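(* Fix $N\ge 1$, $L>0$, $\alpha>0$, $p>0$, $\lambda_e>0$ and $\epsilon\in(0,1)$. Let $K_1=\pi\lambda_e\Gamma(\frac{2}{\alpha}+1)$, $K_2=\frac{(L/N)^\alpha+1}{p}$, and $$R_e^{*}=\log_2\!\left[\frac{2p}{\alpha}\,W_0\!\left(\frac{\alpha}{2}\left[\frac{\ln\frac{1}{1-\epsilon}}{NK_1}\right]^{-\alpha/2}\right)+1\right].$$ Then: (i) for rates $R_t\ge R_s>0$, the constraint $\mathcal{P}_{\mathrm{so}}\le\epsilon$ holds if and only if $R_t-R_s\ge R_e^*$ (with equality $\mathcal{P}_{\mathrm{so}}=\epsilon$ iff $R_t-R_s=R_e^*$); (ii) the function $$\mathbb{U}(R_t)=\frac{(R_t-R_e^* )\exp\!\left[-K_2\left(2^{R_t}-1\right)\right]}{N},\qquad R_t>R_e^*,$$ is quasi-concave, and its unique maximizer is $$R_t^{*}=R_e^{*}+\frac{1}{\ln 2}W_0\!\left(\frac{2^{-R_e^{*}}}{K_2}\right);$$ (iii) consequently, the on-off-transmission throughput $\mathbb{U}_{\mathrm{OFT}}=\mathcal{P}'_t R_s/N$ is maximized over all $(R_t,R_s)$ with $R_t\ge R_s>0$ and $\mathcal{P}_{\mathrm{so}}\le\epsilon$ by $R_t=R_t^*$ and $$R_s=R_s^{*}=\frac{1}{\ln 2}W_0\!\left(\frac{2^{-R_e^{*}}}{K_2}\right).$$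
   Context: Setup (linear multihop network). Source and destination are at distance $L$, connected by $N$ equal-length hops of length $L/N$. Fix path-loss exponent $\alpha>0$, transmitter-side SNR $p>0$, eavesdropper density $\lambda_e>0$. Legitimate hop $n$ has received SNR $\mathrm{SNR}_n=\frac{pH_n}{(L/N)^\alpha+1}$ with $H_n$ i.i.d. exponential of mean 1. For each hop $n$, eavesdroppers form independent homogeneous Poisson point processes $\Phi_{ne}$ of intensity $\lambda_e$ on $\mathbb{R}^2$; eavesdropper $e\in\Phi_{ne}$ has SNR $pS_{ne}/(|X_{ne}|^\alpha+1)$, with $|X_{ne}|$ its distance to the hop-$n$ transmitter and $S_{ne}$ i.i.d. Exp(1) independent of everything. Wiretap code rates $R_t\ge R_s>0$, $R_e=R_t-R_s$, $\beta_t=2^{R_t}-1$, $\beta_e=2^{R_e}-1$. The end-to-end secrecy outage probability is $\mathcal{P}_{\mathrm{so}}=\mathbb{P}(\max_n\max_{e\in\Phi_{ne}}\mathrm{SNR}_{ne}>\beta_e)=1-\exp[-NK_1(\beta_e/p)^{-2/\alpha}e^{-\beta_e/p}]$. On-off transmission (OFT): a hop transmits only when $\mathrm{SNR}_n>\beta_t$, so the per-hop transmission probability is $\mathcal{P}'_t=\mathbb{P}(\mathrm{SNR}_n>\beta_t)=\exp[-\beta_t((L/N)^\alpha+1)/p]$, and the secure transmission throughput is $\mathbb{U}_{\mathrm{OFT}}=\mathcal{P}'_tR_s/N$. $W_0$ denotes the principal branch of the Lambert W function. *)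

(* Defs.v *)
From Stdlib Require Import Reals Lra ClassicalEpsilon Factorial.
Open Scope R_scope.

Definition W0 (x : R) : R :=
  epsilon (inhabits 0) (fun w => -1 <= w /\ w * exp w = x).

(* Euler's Gamma function, via the Gauss limit
   Gamma(s) = lim_n n! n^s / (s (s+1) ... (s+n)),  valid for s > 0. *)
Fixpoint rising (s : R) (n : nat) : R :=
  match n with
  | O => s
  | S k => rising s k * (s + INR (S k))
  end.

Definition Gamma (s : R) : R :=
  epsilon (inhabits 0)
    (fun g => Un_cv (fun n => INR (fact n) * Rpower (INR n) s / rising s n) g).

Definition log2 (x : R) : R := ln x / ln 2.

Definition beta (r : R) : R := Rpower 2 r - 1.

Definition K1 (lam alpha : R) : R := PI * lam * Gamma (2 / alpha + 1).

Definition K2 (N : nat) (L alpha p : R) : R :=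
  (Rpower (L / INR N) alpha + 1) / p.

(* End-to-end secrecy outage probability as a function of R_e = R_t - R_s.
   For R_e = 0 (beta_e = 0) every eavesdropper of the infinite PPP has
   positive SNR, so the outage probability is 1 (the limit of the formula). *)
Definition Pso (N : nat) (lam alpha p Re : R) : R :=
  if Rle_dec Re 0 then 1
  else 1 - exp (- (INR N * K1 lam alpha * Rpower (beta Re / p) (- (2 / alpha))
                   * exp (- (beta Re / p)))).

Definition Re_star (N : nat) (lam alpha p eps : R) : R :=
  log2 (2 * p / alpha *
        W0 (alpha / 2 * Rpower (ln (1 / (1 - eps)) / (INR N * K1 lam alpha))
                               (- (alpha / 2))) + 1).

Definition Pt' (N : nat) (L alpha p Rt : R) : R :=
  exp (- (beta Rt * (Rpower (L / INR N) alpha + 1) / p)).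

Definition U_OFT (N : nat) (L alpha p Rt Rs : R) : R :=
  Pt' N L alpha p Rt * Rs / INR N.

Definition U (N : nat) (L alpha p lam eps Rt : R) : R :=
  (Rt - Re_star N lam alpha p eps) * exp (- (K2 N L alpha p * (Rpower 2 Rt - 1)))
  / INR N.

Definition Rt_star (N : nat) (L alpha p lam eps : R) : R :=
  Re_star N lam alpha p eps
  + / ln 2 * W0 (Rpower 2 (- Re_star N lam alpha p eps) / K2 N L alpha p).

Definition Rs_star (N : nat) (L alpha p lam eps : R) : R :=
  / ln 2 * W0 (Rpower 2 (- Re_star N lam alpha p eps) / K2 N L alpha p).

(* Main.v *)
From Coquelicot Require Import Coquelicot.
Require Import Defs.
From Stdlib Require Import Reals Lra Lia ClassicalEpsilon Factorial.
Open Scope R_scope.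

Lemma ln_le_sub1 x : 0 < x -> ln x <= x - 1.
Proof. intro H. pose proof (exp_ineq1_le (ln x)). rewrite exp_ln in H0; lra. Qed.

Lemma exp_le x y : x <= y -> exp x <= exp y.
Proof. intros [H|H]. left; apply exp_increasing; auto. rewrite H; lra. Qed.

Lemma ln1p_ub y : 0 <= y -> ln (1 + y) <= y.
Proof. intro H. pose proof (ln_le_sub1 (1+y)). lra. Qed.

Lemma ln1p_lb y : 0 <= y -> y / (1 + y) <= ln (1 + y).
Proof.
  intro H. assert (H1 : 0 < /(1+y)) by (apply Rinv_0_lt_compat; lra).
  pose proof (ln_le_sub1 _ H1). rewrite ln_Rinv in H0 by lra.
  assert (/(1+y) - 1 = - (y/(1+y))) by (field; lra). lra.
Qed.

Lemma rising_pos s n : 0 < s -> 0 < rising s n.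
Proof.
  intro Hs. induction n. simpl; auto.
  pose proof (pos_INR (S n)). change (rising s (S n)) with (rising s n * (s + INR (S n))).
  apply Rmult_lt_0_compat; auto. lra.
Qed.

Definition gs (s : R) (n : nat) : R :=
  INR (fact n) * Rpower (INR n) s / rising s n.

Definition Qf (s m : R) : R := Rpower (1 + / m) s / (1 + s / (m + 1)).

Lemma gs_step s m : 0 < s -> (1 <= m)%nat -> gs s (S m) = gs s m * Qf s (INR m).
Proof.
  intros Hs Hm. unfold gs, Qf.
  assert (Hm' : 0 < INR m) by (apply lt_0_INR; lia).
  replace (fact (S m)) with (S m * fact m)%nat by reflexivity.
  rewrite mult_INR.
  replace (INR (S m)) with (INR m * (1 + / INR m)) at 2 by (rewrite S_INR; field; lra).
  rewrite <- Rpower_mult_distr by (try lra; assert (0 < / INR m) by (apply Rinv_0_lt_compat; lra); lra).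
  change (rising s (S m)) with (rising s m * (s + INR (S m))). rewrite S_INR.
  pose proof (rising_pos s m Hs).
  assert (0 < s / (INR m + 1)) by (apply Rdiv_lt_0_compat; lra).
  field. repeat split; try lra.
Qed.

Lemma Qf_ge1 s m : 0 < s -> 1 <= m -> 1 <= Qf s m.
Proof.
  intros Hs Hm. unfold Qf, Rpower.
  assert (Hy : 0 <= / m) by (left; apply Rinv_0_lt_compat; lra).
  pose proof (ln1p_lb _ Hy).
  assert (E : / m / (1 + / m) = / (m + 1)) by (field; lra).
  rewrite E in H.
  pose proof (exp_ineq1_le (s * ln (1 + / m))).
  assert (s * / (m+1) <= s * ln (1 + / m)) by (apply Rmult_le_compat_l; lra).
  assert (0 < 1 + s / (m + 1)) by (assert (0 < s / (m+1)) by (apply Rdiv_lt_0_compat; lra); lra).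
  apply (Rmult_le_reg_r (1 + s / (m + 1))); auto.
  replace (exp (s * ln (1 + / m)) / (1 + s / (m + 1)) * (1 + s / (m + 1))) with (exp (s * ln (1 + / m))) by (field; lra).
  unfold Rdiv in *. lra.
Qed.

Lemma Qf_le s m : 0 < s -> 1 <= m -> Qf s m <= exp ((s + s * s) * (/ m - / (m + 1))).
Proof.
  intros Hs Hm. unfold Qf, Rpower.
  assert (Hy : 0 <= / m) by (left; apply Rinv_0_lt_compat; lra).
  pose proof (ln1p_ub _ Hy) as H1.
  set (y := s / (m + 1)).
  assert (Hy0 : 0 < y) by (apply Rdiv_lt_0_compat; lra).
  pose proof (ln1p_lb y (Rlt_le _ _ Hy0)) as H2.
  assert (E1 : / (1 + y) <= exp (- (y / (1 + y)))).
  { rewrite exp_Ropp. apply Rinv_le_contravar. apply exp_pos.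
    rewrite <- (exp_ln (1 + y)) at 2 by lra. apply exp_le in H2. auto. }
  assert (E2 : - (y / (1 + y)) <= - y + y * y).
  { assert (y / (1+y) = y - y*y/(1+y)) by (field; lra).
    assert (y * y / (1 + y) <= y * y).
    { unfold Rdiv. rewrite <- (Rmult_1_r (y*y)) at 2. apply Rmult_le_compat_l. nra.
      rewrite <- Rinv_1. apply Rinv_le_contravar; lra. }
    lra. }
  assert (E3 : - y + y * y <= - (s / (m+1)) + s * s * (/ m - / (m + 1))).
  { unfold y. assert (/ m - / (m+1) = / (m * (m + 1))) by (field; lra).
    rewrite H. unfold Rdiv.
    assert (s * / (m + 1) * (s * / (m + 1)) = s * s * / ((m+1)*(m+1))) by (field; lra).
    rewrite H0. assert (/ ((m+1)*(m+1)) <= / (m * (m+1))).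
    { apply Rinv_le_contravar; nra. }
    nra. }
  assert (E4 : s * ln (1 + / m) <= s * / m) by (apply Rmult_le_compat_l; lra).
  unfold Rdiv at 1.
  apply Rle_trans with (exp (s * / m) * exp (- (y / (1 + y)))).
  { apply Rmult_le_compat; try (left; apply exp_pos); try (left; apply Rinv_0_lt_compat; lra).
    destruct E4 as [E4|E4]. left; apply exp_increasing; auto. rewrite E4; lra. auto. }
  rewrite <- exp_plus.
  assert (s * / m + - (y / (1 + y)) <= (s + s * s) * (/ m - / (m + 1))).
  { unfold Rdiv in E3. nra. }
  destruct H as [H|H]. left; apply exp_increasing; auto. rewrite H; lra.
Qed.

Lemma gs_bound s n : 0 < s -> gs s (S n) <= / s * exp ((s + s * s) * (1 - / INR (S n))).
Proof.
  intro Hs. induction n.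
  - unfold gs. simpl. unfold Rpower. rewrite ln_1, Rmult_0_r, exp_0.
    replace (1 - / 1) with 0 by (field). rewrite Rmult_0_r, exp_0.
    replace (1 * 1 / (s * (s + 1))) with (/ s * / (s + 1)) by (field; lra).
    rewrite Rmult_1_r. rewrite <- (Rmult_1_r (/ s)) at 2.
    apply Rmult_le_compat_l. left; apply Rinv_0_lt_compat; lra.
    rewrite <- Rinv_1. apply Rinv_le_contravar; lra.
  - rewrite gs_step by (auto; lia).
    assert (Hm : 1 <= INR (S n)) by (apply (le_INR 1); lia).
    pose proof (Qf_le s (INR (S n)) Hs Hm).
    pose proof (Qf_ge1 s (INR (S n)) Hs Hm).
    assert (0 <= gs s (S n)).
    { unfold gs. left. apply Rdiv_lt_0_compat. apply Rmult_lt_0_compat.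
      apply lt_0_INR, lt_O_fact. apply exp_pos. apply rising_pos; auto. }
    apply Rle_trans with (/ s * exp ((s + s * s) * (1 - / INR (S n))) * exp ((s + s * s) * (/ INR (S n) - / (INR (S n) + 1)))).
    { apply Rmult_le_compat; try lra. }
    rewrite Rmult_assoc, <- exp_plus. rewrite (S_INR (S n)).
    right. f_equal. f_equal. ring.
Qed.

Lemma Gamma_pos s : 0 < s -> 0 < Gamma s.
Proof.
  intro Hs.
  set (u := fun n => gs s (S n)).
  assert (Hg : Un_growing u).
  { intro n. unfold u. rewrite (gs_step s (S n)) by (auto; lia).
    assert (Hm : 1 <= INR (S n)) by (apply (le_INR 1); lia).
    pose proof (Qf_ge1 s (INR (S n)) Hs Hm).
    assert (0 <= gs s (S n)).
    { unfold gs. left. apply Rdiv_lt_0_compat. apply Rmult_lt_0_compat.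
      apply lt_0_INR, lt_O_fact. apply exp_pos. apply rising_pos; auto. }
    nra. }
  assert (Hb : bound (EUn u)).
  { exists (/ s * exp (s + s * s)). intros x [i ->]. unfold u.
    eapply Rle_trans. apply gs_bound; auto.
    apply Rmult_le_compat_l. left; apply Rinv_0_lt_compat; lra.
    assert (0 < / INR (S i)) by (apply Rinv_0_lt_compat, lt_0_INR; lia).
    assert ((s + s*s) * (1 - / INR (S i)) <= s + s * s) by nra.
    destruct H0 as [H0|H0]. left; apply exp_increasing; auto. rewrite H0; lra. }
  destruct (Un_cv_crit u Hg Hb) as [l Hl].
  assert (Hl' : Un_cv (gs s) l).
  { intros e He. destruct (Hl e He) as [M HM]. exists (S M). intros n Hn.
    destruct n. lia. apply (HM n). lia. }
  assert (HG : Un_cv (gs s) (Gamma s)).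
  { unfold Gamma. apply epsilon_spec. exists l. exact Hl'. }
  rewrite <- (UL_sequence _ _ _ Hl' HG).
  apply Rlt_le_trans with (u 0%nat).
  - unfold u, gs. apply Rdiv_lt_0_compat. apply Rmult_lt_0_compat.
    apply lt_0_INR, lt_O_fact. apply exp_pos. apply rising_pos; auto.
  - apply growing_ineq; auto.
Qed.

Lemma ln2_pos : 0 < ln 2.
Proof. pose proof ln_lt_2. lra. Qed.

Lemma W0_spec x : 0 < x -> 0 < W0 x /\ W0 x * exp (W0 x) = x.
Proof.
  intros Hx.
  assert (Hex : exists w, -1 <= w /\ w * exp w = x).
  { destruct (IVT (fun w => w * exp w - x) 0 x) as [w [Hw1 Hw2]].
    - intro y. apply derivable_continuous_pt. apply ex_derive_Reals_0. auto_derive. auto.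
    - lra.
    - rewrite Rmult_0_l. lra.
    - assert (x <> 0) by lra. pose proof (exp_ineq1 x H). nra.
    - exists w; split; lra. }
  pose proof (@epsilon_spec R (inhabits 0) _ Hex) as [H1 H2].
  unfold W0. split; auto.
  destruct (Rle_or_lt (epsilon (inhabits 0) (fun w => -1 <= w /\ w * exp w = x)) 0) as [H|H]; auto.
  pose proof (exp_pos (epsilon (inhabits 0) (fun w => -1 <= w /\ w * exp w = x))). nra.
Qed.

Lemma exp_lt_inv x y : exp x < exp y -> x < y.
Proof. intro H. destruct (Rlt_or_le x y) as [h|h]; auto. apply exp_le in h. lra. Qed.

Lemma exp_le_inv x y : exp x <= exp y -> x <= y.
Proof. intro H. destruct (Rlt_or_le y x) as [h|h]; auto. apply exp_increasing in h. lra. Qed.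

Lemma beta_lt a b : a < b -> beta a < beta b.
Proof.
  intro H. unfold beta, Rpower. pose proof ln2_pos.
  assert (exp (a * ln 2) < exp (b * ln 2)) by (apply exp_increasing; nra). lra.
Qed.

Lemma beta_pos r : 0 < r -> 0 < beta r.
Proof.
  intro H. pose proof (beta_lt 0 r H). unfold beta, Rpower in *.
  rewrite Rmult_0_l, exp_0 in H0. lra.
Qed.

Lemma beta_log2 y : 0 < y -> beta (log2 y) = y - 1.
Proof.
  intro H. unfold beta, log2, Rpower. pose proof ln2_pos.
  replace (ln y / ln 2 * ln 2) with (ln y) by (field; lra). rewrite exp_ln; auto.
Qed.

Definition phi (N : nat) (lam alpha p Re : R) :=
  INR N * K1 lam alpha * Rpower (beta Re / p) (- (2 / alpha)) * exp (- (beta Re / p)).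

Lemma phi_decr N lam alpha p a b :
  0 < INR N * K1 lam alpha -> 0 < p -> 0 < alpha -> 0 < a -> a < b ->
  phi N lam alpha p b < phi N lam alpha p a.
Proof.
  intros Hc Hp Ha Ha0 Hab. unfold phi, Rpower.
  pose proof (beta_pos a Ha0). pose proof (beta_lt a b Hab).
  assert (Ba : 0 < beta a / p) by (apply Rdiv_lt_0_compat; lra).
  assert (Bab : beta a / p < beta b / p) by (apply Rmult_lt_compat_r; [apply Rinv_0_lt_compat|]; lra).
  assert (Hk : 0 < 2 / alpha) by (apply Rdiv_lt_0_compat; lra).
  pose proof (ln_increasing _ _ Ba Bab).
  assert (E1 : exp (- (2 / alpha) * ln (beta b / p)) < exp (- (2 / alpha) * ln (beta a / p))).
  { apply exp_increasing. nra. }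
  assert (E2 : exp (- (beta b / p)) < exp (- (beta a / p))).
  { apply exp_increasing. lra. }
  apply Rmult_le_0_lt_compat. left; apply Rmult_lt_0_compat; auto; apply exp_pos.
  left; apply exp_pos. apply Rmult_lt_compat_l; auto. auto.
Qed.

Lemma phi_Res N lam alpha p eps :
  0 < INR N * K1 lam alpha -> 0 < p -> 0 < alpha -> 0 < eps < 1 ->
  phi N lam alpha p (Re_star N lam alpha p eps) = ln (1 / (1 - eps)) /\
  0 < Re_star N lam alpha p eps.
Proof.
  intros Hc Hp Ha He.
  assert (HA : 0 < ln (1 / (1 - eps))).
  { rewrite <- ln_1. apply ln_increasing. lra.
    apply (Rmult_lt_reg_r (1 - eps)). lra. field_simplify; lra. }
  set (A := ln (1 / (1 - eps))) in *.
  set (c := INR N * K1 lam alpha) in *.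
  assert (HAc : 0 < A / c) by (apply Rdiv_lt_0_compat; lra).
  set (z := alpha / 2 * Rpower (A / c) (- (alpha / 2))).
  assert (Hz : 0 < z) by (apply Rmult_lt_0_compat; [lra| apply exp_pos]).
  destruct (W0_spec z Hz) as [Hw Hwe].
  set (w := W0 z) in *.
  assert (Hy : 0 < 2 * p / alpha * w + 1).
  { assert (0 < 2 * p / alpha * w) by (apply Rmult_lt_0_compat; auto; apply Rdiv_lt_0_compat; lra). lra. }
  split.
  - unfold phi, Re_star. fold A. fold c. fold z. fold w.
    rewrite beta_log2 by auto.
    replace ((2 * p / alpha * w + 1 - 1) / p) with (2 / alpha * w) by (field; lra).
    unfold Rpower. rewrite Rmult_assoc, <- exp_plus.
    assert (H2a : 0 < 2 / alpha) by (apply Rdiv_lt_0_compat; lra).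
    assert (Ha2 : 0 < alpha / 2) by lra.
    rewrite ln_mult by auto.
    assert (HLz : ln z = ln w + w) by (rewrite <- Hwe, ln_mult, ln_exp; auto; apply exp_pos).
    assert (HLz2 : ln z = ln (alpha / 2) + - (alpha / 2) * ln (A / c)).
    { unfold z. rewrite ln_mult, ln_Rpower; auto. apply exp_pos. }
    assert (H0 : ln (2 / alpha) + ln (alpha / 2) = 0).
    { rewrite <- ln_mult by auto. replace (2 / alpha * (alpha / 2)) with 1 by (field; lra). apply ln_1. }
    replace (- (2 / alpha) * (ln (2 / alpha) + ln w) + - (2 / alpha * w)) with (ln (A / c)).
    + rewrite exp_ln by auto. field. lra.
    + replace (ln w) with (ln z - w) by lra. rewrite HLz2.
      replace (ln (2 / alpha)) with (- ln (alpha / 2)) by lra. field. lra.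
  - change (0 < log2 (2 * p / alpha * w + 1)). unfold log2.
    apply Rdiv_lt_0_compat; [|apply ln2_pos]. rewrite <- ln_1. apply ln_increasing. lra.
    assert (0 < 2 * p / alpha * w) by (apply Rmult_lt_0_compat; auto; apply Rdiv_lt_0_compat; lra). lra.
Qed.

Lemma part_i N lam alpha p eps Re :
  0 < INR N * K1 lam alpha -> 0 < p -> 0 < alpha -> 0 < eps < 1 -> 0 <= Re ->
  (Pso N lam alpha p Re <= eps <-> Re_star N lam alpha p eps <= Re) /\
  (Pso N lam alpha p Re = eps <-> Re = Re_star N lam alpha p eps).
Proof.
  intros Hc Hp Ha He HRe.
  destruct (phi_Res N lam alpha p eps Hc Hp Ha He) as [H1 H2].
  set (Res := Re_star N lam alpha p eps) in *.
  unfold Pso. destruct (Rle_dec Re 0) as [h|h].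
  - split; split; intro; lra.
  - assert (HRe' : 0 < Re) by lra.
    change (INR N * K1 lam alpha * Rpower (beta Re / p) (- (2 / alpha)) * exp (- (beta Re / p)))
      with (phi N lam alpha p Re).
    assert (E : 1 - eps = exp (- ln (1 / (1 - eps)))).
    { unfold Rdiv. rewrite Rmult_1_l, ln_Rinv, Ropp_involutive, exp_ln; lra. }
    assert (Key1 : phi N lam alpha p Re <= phi N lam alpha p Res <-> Res <= Re).
    { split; intro K.
      - destruct (Rlt_or_le Re Res) as [q|q]; auto.
        pose proof (phi_decr N lam alpha p Re Res Hc Hp Ha HRe' q). lra.
      - destruct K as [K|K]. left; apply phi_decr; auto. rewrite K; lra. }
    assert (Key2 : phi N lam alpha p Re = phi N lam alpha p Res <-> Re = Res).
    { split; intro K.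
      - destruct (Rtotal_order Re Res) as [q|[q|q]]; auto.
        pose proof (phi_decr N lam alpha p Re Res Hc Hp Ha HRe' q). lra.
        pose proof (phi_decr N lam alpha p Res Re Hc Hp Ha H2 q). lra.
      - rewrite K; auto. }
    rewrite <- H1 in E.
    split.
    + rewrite <- Key1. split; intro K.
      * assert (exp (- phi N lam alpha p Res) <= exp (- phi N lam alpha p Re)) by lra.
        apply exp_le_inv in H. lra.
      * assert (exp (- phi N lam alpha p Res) <= exp (- phi N lam alpha p Re)) by (apply exp_le; lra).
        lra.
    + rewrite <- Key2. split; intro K.
      * assert (exp (- phi N lam alpha p Res) = exp (- phi N lam alpha p Re)) by lra.
        apply exp_inv in H. lra.
      * rewrite K. lra.
Qed.

Definition fU (R0 K x : R) := (x - R0) * exp (- (K * (exp (x * ln 2) - 1))).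
Definition xst (R0 K : R) := R0 + / ln 2 * W0 (Rpower 2 (- R0) / K).

Lemma fU_deriv R0 K x : derivable_pt_lim (fU R0 K) x
  (exp (- (K * (exp (x * ln 2) - 1))) * (1 - (x - R0) * K * ln 2 * exp (x * ln 2))).
Proof.
  unfold fU. apply is_derive_Reals. auto_derive. auto. unfold Rminus. ring.
Qed.

Lemma h_sign R0 K : 0 < K ->
  R0 < xst R0 K /\
  (forall x, R0 <= x < xst R0 K -> 0 < 1 - (x - R0) * K * ln 2 * exp (x * ln 2)) /\
  (forall x, xst R0 K < x -> 1 - (x - R0) * K * ln 2 * exp (x * ln 2) < 0).
Proof.
  intro HK. pose proof ln2_pos as Hl.
  assert (Hq : 0 < Rpower 2 (- R0) / K) by (apply Rdiv_lt_0_compat; auto; apply exp_pos).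
  destruct (W0_spec _ Hq) as [Hv Hve].
  set (v := W0 (Rpower 2 (- R0) / K)) in *.
  assert (Hd : xst R0 K - R0 = v / ln 2) by (unfold xst; fold v; field; lra).
  assert (Hd0 : 0 < v / ln 2) by (apply Rdiv_lt_0_compat; auto).
  assert (Id : (xst R0 K - R0) * K * ln 2 * exp (xst R0 K * ln 2) = 1).
  { rewrite Hd. replace (xst R0 K * ln 2) with (R0 * ln 2 + v) by (unfold xst; fold v; field; lra).
    rewrite exp_plus.
    replace (v / ln 2 * K * ln 2 * (exp (R0 * ln 2) * exp v)) with (K * exp (R0 * ln 2) * (v * exp v)) by (field; lra).
    rewrite Hve. unfold Rpower. replace (K * exp (R0 * ln 2) * (exp (- R0 * ln 2) / K)) with (exp (R0 * ln 2) * exp (- R0 * ln 2)) by (field; lra).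
    rewrite <- exp_plus. replace (R0 * ln 2 + - R0 * ln 2) with 0 by ring. apply exp_0. }
  split; [lra|split].
  - intros x [Hx1 Hx2].
    assert ((x - R0) * exp (x * ln 2) < (xst R0 K - R0) * exp (xst R0 K * ln 2)).
    { apply Rmult_le_0_lt_compat; try lra. left; apply exp_pos. apply exp_increasing; nra. }
    assert (0 < K * ln 2) by nra.
    assert (K * ln 2 * ((x - R0) * exp (x * ln 2)) < K * ln 2 * ((xst R0 K - R0) * exp (xst R0 K * ln 2))) by (apply Rmult_lt_compat_l; auto).
    nra.
  - intros x Hx.
    assert ((xst R0 K - R0) * exp (xst R0 K * ln 2) < (x - R0) * exp (x * ln 2)).
    { apply Rmult_le_0_lt_compat; try lra. left; apply exp_pos. apply exp_increasing; nra. }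
    assert (0 < K * ln 2) by nra.
    assert (K * ln 2 * ((xst R0 K - R0) * exp (xst R0 K * ln 2)) < K * ln 2 * ((x - R0) * exp (x * ln 2))) by (apply Rmult_lt_compat_l; auto).
    nra.
Qed.

Lemma fU_incr R0 K a b : 0 < K -> R0 <= a -> a < b -> b <= xst R0 K -> fU R0 K a < fU R0 K b.
Proof.
  intros HK Ha Hab Hb. destruct (h_sign R0 K HK) as [_ [H1 _]].
  destruct (MVT_cor2 (fU R0 K) _ a b Hab (fun c _ => fU_deriv R0 K c)) as [c [Hc1 Hc2]].
  assert (0 < exp (- (K * (exp (c * ln 2) - 1))) * (1 - (c - R0) * K * ln 2 * exp (c * ln 2))).
  { apply Rmult_lt_0_compat. apply exp_pos. apply H1. lra. }
  nra.
Qed.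

Lemma fU_decr R0 K a b : 0 < K -> xst R0 K <= a -> a < b -> fU R0 K b < fU R0 K a.
Proof.
  intros HK Ha Hab. destruct (h_sign R0 K HK) as [_ [_ H1]].
  destruct (MVT_cor2 (fU R0 K) _ a b Hab (fun c _ => fU_deriv R0 K c)) as [c [Hc1 Hc2]].
  assert (exp (- (K * (exp (c * ln 2) - 1))) * (1 - (c - R0) * K * ln 2 * exp (c * ln 2)) < 0).
  { pose proof (exp_pos (- (K * (exp (c * ln 2) - 1)))). pose proof (H1 c ltac:(lra)). nra. }
  nra.
Qed.

Lemma fU_incr_w R0 K a b : 0 < K -> R0 <= a -> a <= b -> b <= xst R0 K -> fU R0 K a <= fU R0 K b.
Proof. intros HK Ha [Hab|Hab] Hb. left; apply fU_incr; auto. rewrite Hab; lra. Qed.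

Lemma fU_decr_w R0 K a b : 0 < K -> xst R0 K <= a -> a <= b -> fU R0 K b <= fU R0 K a.
Proof. intros HK Ha [Hab|Hab]. left; apply fU_decr; auto. rewrite Hab; lra. Qed.

Lemma fU_quasi R0 K x y t : 0 < K -> R0 < x -> R0 < y -> 0 <= t <= 1 ->
  fU R0 K x <= fU R0 K (t * x + (1 - t) * y) \/ fU R0 K y <= fU R0 K (t * x + (1 - t) * y).
Proof.
  intros HK Hx Hy Ht. set (z := t * x + (1 - t) * y).
  assert (Hz : Rmin x y <= z <= Rmax x y).
  { unfold z, Rmin, Rmax. destruct (Rle_dec x y); nra. }
  destruct (Rle_or_lt z (xst R0 K)) as [h|h].
  - unfold Rmin in Hz. destruct (Rle_dec x y).
    + left. apply fU_incr_w; lra.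
    + right. apply fU_incr_w; lra.
  - unfold Rmax in Hz. destruct (Rle_dec x y).
    + right. apply fU_decr_w; lra.
    + left. apply fU_decr_w; lra.
Qed.

Lemma fU_max R0 K x : 0 < K -> R0 < x -> x <> xst R0 K -> fU R0 K x < fU R0 K (xst R0 K).
Proof.
  intros HK Hx Hne. destruct (h_sign R0 K HK) as [H0 _].
  destruct (Rtotal_order x (xst R0 K)) as [h|[h|h]].
  - apply fU_incr; lra.
  - contradiction.
  - apply fU_decr; lra.
Qed.

Theorem theorem2 (N : nat) (L alpha p lam eps : R) :
  (1 <= N)%nat -> 0 < L -> 0 < alpha -> 0 < p -> 0 < lam -> 0 < eps < 1 ->
  let Res := Re_star N lam alpha p eps in
  let Uf := U N L alpha p lam eps in
  let Rts := Rt_star N L alpha p lam eps in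
  let Rss := Rs_star N L alpha p lam eps in
  (* (i) *)
  (forall Rt Rs, Rs <= Rt -> 0 < Rs ->
     (Pso N lam alpha p (Rt - Rs) <= eps <-> Res <= Rt - Rs) /\
     (Pso N lam alpha p (Rt - Rs) = eps <-> Rt - Rs = Res)) /\
  (* (ii) quasi-concavity on (R_e^*, oo) and unique maximizer *)
  (forall x y t, Res < x -> Res < y -> 0 <= t <= 1 ->
     Rmin (Uf x) (Uf y) <= Uf (t * x + (1 - t) * y)) /\
  Res < Rts /\
  (forall Rt, Res < Rt -> Rt <> Rts -> Uf Rt < Uf Rts) /\
  (* (iii) optimal rate pair for OFT *)
  (Rss <= Rts /\ 0 < Rss /\ Pso N lam alpha p (Rts - Rss) <= eps) /\
  (forall Rt Rs, Rs <= Rt -> 0 < Rs -> Pso N lam alpha p (Rt - Rs) <= eps ->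
     U_OFT N L alpha p Rt Rs <= U_OFT N L alpha p Rts Rss).
Proof.
  intros HN HL Ha Hp Hlam He Res Uf Rts Rss.
  assert (HNp : 0 < INR N) by (apply lt_0_INR; lia).
  assert (HK1 : 0 < K1 lam alpha).
  { unfold K1. apply Rmult_lt_0_compat. apply Rmult_lt_0_compat; auto. apply PI_RGT_0.
    apply Gamma_pos. assert (0 < 2 / alpha) by (apply Rdiv_lt_0_compat; lra). lra. }
  assert (Hc : 0 < INR N * K1 lam alpha) by (apply Rmult_lt_0_compat; auto).
  set (K := K2 N L alpha p).
  assert (HK : 0 < K) by (unfold K, K2; apply Rdiv_lt_0_compat; auto; pose proof (exp_pos (alpha * ln (L / INR N))); unfold Rpower; lra).
  destruct (phi_Res N lam alpha p eps Hc Hp Ha He) as [_ HRes].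
  fold Res in HRes.
  assert (HUf : forall x, Uf x = fU Res K x / INR N) by (intro; reflexivity).
  assert (HRts : Rts = xst Res K) by reflexivity.
  assert (HRss : Rss = Rts - Res) by (unfold Rss, Rts, Rs_star, Rt_star; fold Res; ring).
  destruct (h_sign Res K HK) as [Hlt _].
  assert (Hinv : 0 < / INR N) by (apply Rinv_0_lt_compat; auto).
  assert (HO : forall a b, U_OFT N L alpha p a b = exp (- (K * (exp (a * ln 2) - 1))) * b / INR N).
  { intros a b. unfold U_OFT, Pt'.
    apply (f_equal (fun u => exp (- u) * b / INR N)). unfold K, K2, beta, Rpower. field. lra. }
  assert (Hi : forall Rt Rs, Rs <= Rt -> 0 < Rs ->
     (Pso N lam alpha p (Rt - Rs) <= eps <-> Res <= Rt - Rs) /\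
     (Pso N lam alpha p (Rt - Rs) = eps <-> Rt - Rs = Res)).
  { intros Rt Rs H1 H2. apply part_i; auto. lra. }
  split; [exact Hi|].
  split.
  { intros x y t Hx Hy Ht. rewrite !HUf. unfold Rdiv.
    destruct (fU_quasi Res K x y t HK Hx Hy Ht) as [h|h].
    - eapply Rle_trans; [apply Rmin_l|]. apply Rmult_le_compat_r; lra.
    - eapply Rle_trans; [apply Rmin_r|]. apply Rmult_le_compat_r; lra. }
  split; [rewrite HRts; exact Hlt|].
  split.
  { intros Rt H1 H2. rewrite !HUf, HRts. unfold Rdiv. apply Rmult_lt_compat_r; auto.
    apply fU_max; auto. }
  split.
  { assert (Hs1 : Rss <= Rts) by (rewrite HRss; lra).
    assert (Hs2 : 0 < Rss) by (rewrite HRss, HRts; lra).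
    split; [lra|split; [lra|]].
    apply (Hi Rts Rss Hs1 Hs2). rewrite HRss. lra. }
  intros Rt Rs H1 H2 H3.
  assert (H4 : Res <= Rt - Rs) by (apply (Hi Rt Rs H1 H2); auto).
  rewrite !HO.
  apply Rle_trans with (Uf Rt).
  { rewrite HUf. unfold fU, Rdiv. apply Rmult_le_compat_r; [lra|].
    rewrite (Rmult_comm (Rt - Res)). apply Rmult_le_compat_l. left; apply exp_pos. lra. }
  apply Rle_trans with (Uf Rts).
  { destruct (Req_dec Rt Rts) as [e|e]. rewrite e; lra. left.
    rewrite !HUf, HRts. unfold Rdiv. apply Rmult_lt_compat_r; auto.
    apply fU_max; auto; lra. }
  rewrite HUf, HRss. unfold fU. rewrite HRts. right. unfold Rdiv. ring.
Qed.
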